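(* Let $\epsilon_1, \epsilon_2, c \in (0, 1)$. Suppose that a maximization problem admits a polynomial-time $c$-approximation algorithm and a $(1 - \epsilon_1, \epsilon_2)$-APPA $(\mathcal{A}, \mathcal{B})$. Then it admits a $(1 - \epsilon_1 - \epsilon_2 / c)$-APPA whose reduction algorithm is $\mathcal{A}$.
   Context: For a parameterized maximization problem with instances $(I,k)$ and optimum value $\mathrm{OPT}(I,k)$, a solution is $\beta$-approximate if its value is at least $\beta \cdot \mathrm{OPT}(I,k)$. An $\alpha$-APPA (approximate polynomial-time pre-processing algorithm) is a pair of polynomial-time algorithms $(\mathcal{A}, \mathcal{B})$ (reduction and solution-lifting algorithm): given an instance $(I, k)$, $\mathcal{A}$ outputs an instance $(I', k')$ of the same problem, and given any $\beta$-approximate solution of $(I', k')$, $\mathcal{B}$ outputs an $\alpha\beta$-approximate solution of $(I, k)$. An $(\alpha, \gamma)$-APPA is defined identically except that $\mathcal{B}$ is only required to output an $(\alpha\beta - \gamma)$-approximate solution of $(I,k)$, i.e. one of value at least $(\alpha\beta-\gamma)\mathrm{OPT}(I,k)$. A $c$-approximation algorithm outputs a $c$-approximate solution. *)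

(* Defs.v *)
From Stdlib Require Import Reals.
Open Scope R_scope.

(* An abstract model of "polynomial-time computable functions": a class of
   functions between types, closed under the usual structural operations
   (identity, composition, pairing, projections). *)
Record CompModel := {
  ptime : forall (A B : Type), (A -> B) -> Prop;
  ptime_id : forall A, ptime A A (fun x => x);
  ptime_comp : forall A B C (f : A -> B) (g : B -> C),
      ptime A B f -> ptime B C g -> ptime A C (fun x => g (f x));
  ptime_pair : forall A B C (f : A -> B) (g : A -> C),
      ptime A B f -> ptime A C g -> ptime A (B * C)%type (fun x => (f x, g x));
  ptime_fst : forall A B, ptime (A * B)%type A fst;
  ptime_snd : forall A B, ptime (A * B)%type B snd
}.

(* A parameterized maximization problem: instances are pairs (I, k) of a raw
   instance and a parameter; solutions, feasibility, a nonnegative objective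
   value, and OPT = the supremum of the values of feasible solutions.
   As for NPO problems, the objective is polynomial-time computable, which we
   express by: choosing the better of two given solutions is polynomial-time. *)
Record MaxProblem (M : CompModel) := {
  raw : Type;
  sol : Type;
  feasible : (raw * nat)%type -> sol -> Prop;
  value : (raw * nat)%type -> sol -> R;
  value_nonneg : forall x s, feasible x s -> 0 <= value x s;
  opt : (raw * nat)%type -> R;
  opt_nonneg : forall x, 0 <= opt x;
  opt_upper : forall x s, feasible x s -> value x s <= opt x;
  opt_least : forall x r, 0 <= r -> (forall s, feasible x s -> value x s <= r) ->
      opt x <= r;
  ptime_better : ptime M ((raw * nat) * (sol * sol))%type sol
      (fun p => if Rle_dec (value (fst p) (fst (snd p))) (value (fst p) (snd (snd p)))
                then snd (snd p) else fst (snd p))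
}.

Arguments raw {M}.
Arguments sol {M}.
Arguments feasible {M}.
Arguments value {M}.
Arguments opt {M}.

Definition Inst {M : CompModel} (P : MaxProblem M) : Type := (raw P * nat)%type.

Definition approx {M : CompModel} (P : MaxProblem M) (beta : R)
    (x : Inst P) (s : sol P) : Prop :=
  feasible P x s /\ value P x s >= beta * opt P x.

Definition c_approx_alg {M : CompModel} (P : MaxProblem M) (c : R)
    (C : Inst P -> sol P) : Prop :=
  ptime M (Inst P) (sol P) C /\
  forall x, (exists s, feasible P x s) -> approx P c x (C x).

(* (alpha, gamma)-APPA: reduction A, solution lifting B (which receives the
   original instance and a solution of the reduced instance A x). *)
Definition appa_gamma {M : CompModel} (P : MaxProblem M) (alpha gamma : R)
    (A : Inst P -> Inst P) (B : Inst P -> sol P -> sol P) : Prop :=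
  ptime M (Inst P) (Inst P) A /\
  ptime M (Inst P * sol P)%type (sol P) (fun p => B (fst p) (snd p)) /\
  forall (x : Inst P) (beta : R) (s' : sol P),
    0 <= beta <= 1 -> approx P beta (A x) s' ->
    approx P (alpha * beta - gamma) x (B x s').

Definition appa {M : CompModel} (P : MaxProblem M) (alpha : R)
    (A : Inst P -> Inst P) (B : Inst P -> sol P -> sol P) : Prop :=
  ptime M (Inst P) (Inst P) A /\
  ptime M (Inst P * sol P)%type (sol P) (fun p => B (fst p) (snd p)) /\
  forall (x : Inst P) (beta : R) (s' : sol P),
    0 <= beta <= 1 -> approx P beta (A x) s' ->
    approx P (alpha * beta) x (B x s').

(* Main.v *)
Require Import Defs.
From Stdlib Require Import Reals Lra.
Open Scope R_scope.

Theorem lemma2p1 (M : CompModel) (P : MaxProblem M) (e1 e2 c : R) :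
  0 < e1 < 1 -> 0 < e2 < 1 -> 0 < c < 1 ->
  (exists C : Inst P -> sol P, c_approx_alg P c C) ->
  forall (A : Inst P -> Inst P) (B : Inst P -> sol P -> sol P),
    appa_gamma P (1 - e1) e2 A B ->
    exists B' : Inst P -> sol P -> sol P, appa P (1 - e1 - e2 / c) A B'.
Proof.
  intros He1 He2 Hc [C [HCp HC]] A B [HA [HB HAB]].
  exists (fun x s => if Rle_dec (value P x (B x s)) (value P x (C x)) then C x else B x s).
  split; [exact HA|]. split.
  - pose proof (ptime_better _ P) as Hbet.
    assert (Hf : ptime M (Inst P * sol P)%type ((raw P * nat) * (sol P * sol P))%type
       (fun p => (fst p, (B (fst p) (snd p), C (fst p))))).
    { apply ptime_pair. apply ptime_fst. apply ptime_pair. exact HB.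
      apply ptime_comp with (f := fst). apply ptime_fst. exact HCp. }
    exact (ptime_comp M _ _ _ _ _ Hf Hbet).
  - intros x beta s' Hb Hap.
    destruct (HAB x beta s' Hb Hap) as [Hf Hv].
    assert (HCx : approx P c x (C x)) by (apply HC; eauto).
    destruct HCx as [HCf HCv].
    pose proof (opt_nonneg _ P x) as Ho.
    assert (Hq : 0 < e2 / c) by (apply Rdiv_lt_0_compat; lra).
    destruct (Rle_dec (value P x (B x s')) (value P x (C x))) as [Hle|Hle];
      split; auto.
    + destruct (Rle_dec c beta) as [Hcb|Hcb].
      * assert (e2 <= e2 / c * beta).
        { unfold Rdiv. rewrite Rmult_assoc.
          assert (1 <= / c * beta).
          { apply Rmult_le_reg_l with c; [lra|].
            rewrite <- Rmult_assoc, Rinv_r by lra. lra. }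
          nra. }
        nra.
      * assert (beta * opt P x <= c * opt P x) by nra.
        assert (0 <= (e1 + e2 / c) * (beta * opt P x)).
        { apply Rmult_le_pos; [lra|]. apply Rmult_le_pos; lra. }
        assert ((1 - e1 - e2 / c) * beta * opt P x <= beta * opt P x) by nra.
        lra.
    + destruct (Rle_dec c beta) as [Hcb|Hcb].
      * assert (e2 <= e2 / c * beta).
        { unfold Rdiv. rewrite Rmult_assoc.
          assert (1 <= / c * beta).
          { apply Rmult_le_reg_l with c; [lra|].
            rewrite <- Rmult_assoc, Rinv_r by lra. lra. }
          nra. }
        nra.
      * assert (beta * opt P x <= c * opt P x) by nra.
        assert (0 <= (e1 + e2 / c) * (beta * opt P x)).
        { apply Rmult_le_pos; [lra|]. apply Rmult_le_pos; lra. }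
        assert ((1 - e1 - e2 / c) * beta * opt P x <= beta * opt P x) by nra.
        lra.
Qed.
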